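(* Let $M_n=(Q,\Sigma,\Delta,Q_\alpha,F)$ be a simple NFA. Then the DFA $M_d=\mathrm{SubsetConstruction}(M_n)$ is minimal, i.e. no DFA with fewer states recognizes the same language as $M_d$.
   Context: An NFA is a tuple $M=(Q,\Sigma,\Delta,Q_\alpha,F)$ where $Q$ is a finite set of states, $\Sigma$ a finite alphabet, $\Delta:Q\times\Sigma\to\mathcal{P}(Q)$ the transition function, $Q_\alpha\subseteq Q$ the set of start states and $F\subseteq Q$ the set of accepting states. $\Delta$ is extended to strings by $\hat\Delta(q,\varepsilon)=\{q\}$ and $\hat\Delta(q,\sigma s)=\bigcup_{p\in\Delta(q,\sigma)}\hat\Delta(p,s)$ for $\sigma\in\Sigma$, $s\in\Sigma^*$. The language of a state $q$ is $\mathcal{L}(q)=\{s\in\Sigma^*:\hat\Delta(q,s)\cap F\neq\emptyset\}$, and for $Q'\subseteq Q$, $\mathcal{L}(Q')=\bigcup_{q\in Q'}\mathcal{L}(q)$; $M$ recognizes $\mathcal{L}(Q_\alpha)$. A state $q$ is accessible if $q\in\hat\Delta(q_\alpha,s)$ for some $q_\alpha\in Q_\alpha$ and $s\in\Sigma^*$. An NFA is called simple if all its states are accessible and the languages $\mathcal{L}(q)$, $q\in Q$, are non-empty and pairwise disjoint. $\mathrm{SubsetConstruction}(M)$ denotes the DFA obtained by the subset construction with inaccessible states removed: its states are the subsets of $Q$ of the form $\hat\delta(Q_\alpha,s)$, $s\in\Sigma^*$, where $\delta(Q',\sigma)=\bigcup_{q\in Q'}\Delta(q,\sigma)$ (extended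 to strings in the usual way); its start state is $Q_\alpha$, its transition function is $\delta$, and its accepting states are those subsets $Q'$ with $Q'\cap F\neq\emptyset$. It recognizes the same language as $M$. *)

(* Defs.v *)
From Stdlib Require Import ClassicalDescription.
From mathcomp Require Import all_boot.
Set Implicit Arguments. Unset Strict Implicit. Unset Printing Implicit Defensive.

Record nfa (Sigma : finType) := Nfa {
  nstate : finType;
  ntrans : nstate -> Sigma -> {set nstate};
  nstart : {set nstate};
  nfinal : {set nstate} }.

Record dfa (Sigma : finType) := Dfa {
  dstate : finType;
  dstart : dstate;
  dtrans : dstate -> Sigma -> dstate;
  dfinal : {set dstate} }.

Section Automata.
Variable Sigma : finType.

Fixpoint nhat (M : nfa Sigma) (q : nstate M) (s : seq Sigma) : {set nstate M} :=
  match s with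
  | [::] => [set q]
  | a :: s' => \bigcup_(p in ntrans q a) nhat p s'
  end.

Definition state_lang (M : nfa Sigma) (q : nstate M) (s : seq Sigma) : Prop :=
  nhat q s :&: nfinal M != set0.

Definition set_lang (M : nfa Sigma) (Q' : {set nstate M}) (s : seq Sigma) : Prop :=
  exists2 q, q \in Q' & state_lang q s.

Definition nfa_lang (M : nfa Sigma) := set_lang (nstart M).

Definition accessible (M : nfa Sigma) (q : nstate M) : Prop :=
  exists2 q0, q0 \in nstart M & exists s, q \in nhat q0 s.

Definition simple_nfa (M : nfa Sigma) : Prop :=
  [/\ forall q : nstate M, accessible q,
      forall q : nstate M, exists s, state_lang q s &
      forall q p : nstate M, q <> p -> forall s, ~ (state_lang q s /\ state_lang p s)].

Definition dhat (A : dfa Sigma) (x : dstate A) (s : seq Sigma) := foldl (@dtrans _ A) x s.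
Definition dfa_lang (A : dfa Sigma) (s : seq Sigma) : Prop := dhat (dstart A) s \in dfinal A.

Definition minimal_dfa (A : dfa Sigma) : Prop :=
  forall B : dfa Sigma, (forall s, dfa_lang B s <-> dfa_lang A s) ->
    ~ (#|dstate B| < #|dstate A|).

Definition sdelta (M : nfa Sigma) (X : {set nstate M}) (a : Sigma) : {set nstate M} :=
  \bigcup_(q in X) ntrans q a.
Definition sdelta_hat (M : nfa Sigma) (X : {set nstate M}) (s : seq Sigma) :=
  foldl (@sdelta M) X s.

Definition reach_states (M : nfa Sigma) : {set {set nstate M}} :=
  [set X | is_left (excluded_middle_informative (exists s, X = sdelta_hat (nstart M) s))].

Lemma reach_statesP (M : nfa Sigma) X :
  X \in reach_states M <-> exists s, X = sdelta_hat (nstart M) s.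
Proof.
rewrite inE; case: excluded_middle_informative => /= H; split=> //; try (by move=> H'; case: (H H')).
Qed.

Lemma reach_start (M : nfa Sigma) : nstart M \in reach_states M.
Proof. by apply/reach_statesP; exists [::]. Qed.

Lemma reach_step (M : nfa Sigma) X a :
  X \in reach_states M -> sdelta X a \in reach_states M.
Proof.
move/reach_statesP=> [s ->]; apply/reach_statesP; exists (rcons s a).
by rewrite /sdelta_hat foldl_rcons.
Qed.

Definition subset_state (M : nfa Sigma) : finType :=
  {X : {set nstate M} | X \in reach_states M}.

Definition SubsetConstruction (M : nfa Sigma) : dfa Sigma :=
  @Dfa Sigma (subset_state M)
    (exist _ (nstart M) (reach_start M))
    (fun X a => exist _ (sdelta (val X) a) (reach_step a (valP X)))
    [set X : subset_state M | val X :&: nfinal M != set0].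

End Automata.

(* Main.v *)
Require Import Defs.
From mathcomp Require Import all_boot.
Set Implicit Arguments. Unset Strict Implicit. Unset Printing Implicit Defensive.

Section Proofs.
Variable Sigma : finType.
Variable M : nfa Sigma.

Lemma mem_sdelta_hat (X : {set nstate M}) s x :
  x \in sdelta_hat X s <-> exists2 q, q \in X & x \in nhat q s.
Proof.
elim: s X => [|a s IH] X /=.
  split; first by move=> H; exists x => //; rewrite inE.
  by case=> q Hq; rewrite inE => /eqP ->.
rewrite /sdelta_hat /= -/(sdelta_hat _ _) IH; split.
  case=> p /bigcupP [q Hq Hp] Hx; exists q => //.
  by apply/bigcupP; exists p.
case=> q Hq /bigcupP [p Hp Hx]; exists p => //.
by apply/bigcupP; exists q.
Qed.

Lemma acc_sdelta_hat (X : {set nstate M}) s :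
  (sdelta_hat X s :&: nfinal M != set0) <-> set_lang X s.
Proof.
split.
  case/set0Pn=> x; rewrite inE => /andP [/mem_sdelta_hat [q Hq Hx] Hf].
  exists q => //; apply/set0Pn; exists x; by rewrite inE Hx.
case=> q Hq /set0Pn [x]; rewrite inE => /andP [Hx Hf].
apply/set0Pn; exists x; rewrite inE Hf andbT.
by apply/mem_sdelta_hat; exists q.
Qed.

Lemma val_dhat (X : dstate (SubsetConstruction M)) s :
  val (dhat X s) = sdelta_hat (val X) s.
Proof.
elim: s X => [|a s IH] X //=.
by rewrite /dhat /= -/(dhat _ _) IH.
Qed.

Lemma lang_cat w s :
  dfa_lang (SubsetConstruction M) (w ++ s) <->
  set_lang (sdelta_hat (nstart M) w) s.
Proof.
rewrite /dfa_lang /= inE val_dhat /= /sdelta_hat foldl_cat -/(sdelta_hat _ _).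
exact: acc_sdelta_hat.
Qed.

End Proofs.

Theorem mainTheorem1 (Sigma : finType) (Mn : nfa Sigma) :
  simple_nfa Mn -> minimal_dfa (SubsetConstruction Mn).
Proof.
case=> _ Hne Hdis B HB Hlt.
have exw : forall X : subset_state Mn,
    exists s, val X == sdelta_hat (nstart Mn) s.
  move=> X; case: (proj1 (reach_statesP (val X)) (valP X)) => s Hs.
  by exists s; apply/eqP.
pose w (X : subset_state Mn) : seq Sigma := xchoose (exw X).
have wP : forall X : subset_state Mn, val X = sdelta_hat (nstart Mn) (w X).
  move=> X; exact/eqP/(xchooseP (exw X)).
pose f (X : subset_state Mn) := dhat (dstart B) (w X).
have inj : injective f.
  move=> X Y e; apply/eqP; case: (boolP (X == Y)) => // neq; exfalso.
  have nv : val X != val Y by apply: contra neq => /eqP/val_inj ->.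
  have key : forall s, set_lang (val X) s <-> set_lang (val Y) s.
    move=> s; rewrite (wP X) (wP Y) -!lang_cat -!HB.
    rewrite /dfa_lang /dhat !foldl_cat.
    by have := e; rewrite /f /dhat => ->.
  have sep : forall (U V : {set nstate Mn}) q,
      (forall s, set_lang U s -> set_lang V s) -> q \in U -> q \notin V -> False.
    move=> U V q HUV qU qV; case: (Hne q) => s Hs.
    case: (HUV s (ex_intro2 _ _ q qU Hs)) => p pV Hp.
    apply: (Hdis q p _ s (conj Hs Hp)) => eqp; subst p.
    by rewrite pV in qV.
  case: (boolP [exists q, (q \in val X) != (q \in val Y)]).
    case/existsP=> q; case qX: (q \in val X); case qY: (q \in val Y) => //= _.
      by apply: (sep _ _ q (fun s => proj1 (key s))); rewrite ?qX ?qY.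
    by apply: (sep _ _ q (fun s => proj2 (key s))); rewrite ?qX ?qY.
  rewrite negb_exists => /forallP H; move/negP: nv; apply; apply/eqP/setP=> q.
  by move: (H q); rewrite negbK => /eqP.
have := leq_card f inj.
by rewrite leqNgt Hlt.
Qed.
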